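(* Let $D\subset\mathbb R^d$ be compact and let $L_1,L_2$ be compact metric spaces. Let $\varphi_i:D\times L_i\to\mathbb R^n$ ($i=1,2$) be continuous maps such that (a) they are $\alpha$-Hölder with respect to $x$: there are $C>0$ and $\alpha\in(0,1]$ with $\|\varphi_i(\xi,x)-\varphi_i(\xi,y)\|\le C\,\rho_i(x,y)^\alpha$ for all $\xi\in D$, $x,y\in L_i$ ($\rho_i$ the metric of $L_i$); and (b) there is $M>0$ such that for all $x_1\in L_1$, $x_2\in L_2$, $\xi,\xi'\in D$, the function $\Phi(\xi,x_1,x_2)=\varphi_1(\xi,x_1)-\varphi_2(\xi,x_2)$ satisfies $\|\Phi(\xi',x_1,x_2)-\Phi(\xi,x_1,x_2)\|\ge M|\xi'-\xi|$. Then $\Delta=\{\xi\in D:\varphi_1(\xi,L_1)\cap\varphi_2(\xi,L_2)\neq\varnothing\}$ is a compact set and $$\dim_H\Delta\le\min\left\{\frac{\dim_H(L_1\times L_2)}{\alpha},\,d\right\}.$$ *)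

(* Defs.v *)
From HB Require Import structures.
From mathcomp Require Import all_boot all_order all_algebra.
From mathcomp Require Import all_classical all_reals.
From mathcomp Require Import ereal topology normedtype sequences exp.
Set Implicit Arguments. Unset Strict Implicit. Unset Printing Implicit Defensive.
Import Order.TTheory GRing.Theory Num.Theory.
Local Open Scope classical_set_scope.
Local Open Scope ring_scope.

Definition is_metric (R : realType) (T : Type) (rho : T -> T -> R) : Prop :=
  (forall x y, 0 <= rho x y) /\ (forall x y, rho x y = 0 <-> x = y) /\
  (forall x y, rho x y = rho y x) /\
  (forall x y z, rho x z <= rho x y + rho y z).

Definition metric_compact (R : realType) (T : Type) (rho : T -> T -> R)
    (A : set T) : Prop :=
  forall u : nat -> T, (forall k, A (u k)) ->
    exists (phi : nat -> nat) (x : T),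
      A x /\ (forall k, (phi k < phi k.+1)%N) /\
      (forall e : R, 0 < e -> exists N, forall k, (N <= k)%N -> rho (u (phi k)) x < e).

Definition eucl (R : realType) (k : nat) (v : 'rV[R]_k) : R :=
  Num.sqrt (\sum_(i < k) v ord0 i ^+ 2).
Definition euc_dist (R : realType) (k : nat) (v w : 'rV[R]_k) : R := eucl (v - w).

Definition prod_dist (R : realType) (T1 T2 : Type) (rho1 : T1 -> T1 -> R)
    (rho2 : T2 -> T2 -> R) (p q : T1 * T2) : R :=
  Num.max (rho1 p.1 q.1) (rho2 p.2 q.2).

Local Open Scope ereal_scope.

(* diameter, with diam set0 = 0 *)
Definition diam (R : realType) (T : Type) (rho : T -> T -> R) (U : set T) : \bar R :=
  ereal_sup ([set 0%:E] `|` [set (rho x y)%:E | x in U & y in U]).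

Definition hausdorff_approx (R : realType) (T : Type) (rho : T -> T -> R)
    (s delta : R) (A : set T) : \bar R :=
  ereal_inf [set \sum_(0 <= i <oo) ((fine (diam rho (U i))) `^ s)%:E
            | U in [set U : nat -> set T |
                    A `<=` \bigcup_i U i /\ forall i, diam rho (U i) <= delta%:E]].

Definition hausdorff_measure (R : realType) (T : Type) (rho : T -> T -> R)
    (s : R) (A : set T) : \bar R :=
  ereal_sup [set hausdorff_approx rho s delta A | delta in [set d : R | (0 < d)%R]].

Definition hausdorff_dim (R : realType) (T : Type) (rho : T -> T -> R)
    (A : set T) : \bar R :=
  ereal_inf [set s%:E | s in [set s : R | (0 < s)%R /\ hausdorff_measure rho s A = 0]].

(* Main.v *)
Require Import Defs.
From HB Require Import structures.
From mathcomp Require Import all_boot all_order all_algebra.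
From mathcomp Require Import all_classical all_reals.
From mathcomp Require Import ereal topology normedtype sequences exp.
From mathcomp Require Import ring lra.
Import Order.TTheory GRing.Theory Num.Theory.
Local Open Scope classical_set_scope.
Local Open Scope ring_scope.
Set Implicit Arguments. Unset Strict Implicit.
Lemma eucl_ge0 (R : realType) k (v : 'rV[R]_k) : 0 <= eucl v.
Proof. exact: sqrtr_ge0. Qed.

Lemma coord_le_eucl (R : realType) k (v : 'rV[R]_k) i : `|v ord0 i| <= eucl v.
Proof.
rewrite /eucl -sqrtr_sqr ler_sqrt; last by apply: sumr_ge0 => j _; exact: sqr_ge0.
by rewrite (bigD1 i) //= lerDl; apply: sumr_ge0 => j _; exact: sqr_ge0.
Qed.

Lemma eucl_le_l1 (R : realType) k (v : 'rV[R]_k) : eucl v <= \sum_i `|v ord0 i|.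
Proof.
have H : (\sum_(i < k) v ord0 i ^+ 2 <= (\sum_i `|v ord0 i|) ^+ 2) /\ 0 <= \sum_i `|v ord0 i|.
  apply: (big_ind2 (fun a b => a <= b ^+ 2 /\ 0 <= b)).
  - by rewrite expr2 mulr0.
  - move=> x1 x2 y1 y2 [h1 h2] [h3 h4]; split; last exact: addr_ge0.
    rewrite sqrrD; apply: (le_trans (lerD h1 h3)).
    rewrite -addrA lerD2l lerDr; apply: mulrn_wge0; exact: mulr_ge0.
  - by move=> i _; rewrite -normrX ger0_norm ?sqr_ge0 //; split.
case: H => H1 H2.
by rewrite /eucl -(ger0_norm H2) -sqrtr_sqr ler_sqrt // sqr_ge0.
Qed.

Lemma l1_le (R : realType) k (v : 'rV[R]_k) : \sum_i `|v ord0 i| <= k%:R * eucl v.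
Proof.
apply: (@le_trans _ _ (\sum_(i < k) eucl v)).
  by apply: ler_sum => i _; exact: coord_le_eucl.
by rewrite sumr_const card_ord mulr_natl.
Qed.

Lemma euclD (R : realType) k (u v : 'rV[R]_k) :
  eucl (u + v) <= k%:R * (eucl u + eucl v).
Proof.
apply: le_trans (eucl_le_l1 (u + v)) _.
have -> : \sum_i `|(u + v) ord0 i| = \sum_i `|u ord0 i + v ord0 i|.
  by apply: eq_bigr => i _; rewrite mxE.
apply: (@le_trans _ _ (\sum_(i < k) (`|u ord0 i| + `|v ord0 i|))).
  by apply: ler_sum => i _; exact: ler_normD.
by rewrite big_split /= mulrDr; apply: lerD; apply: l1_le.
Qed.

Lemma euclN (R : realType) k (v : 'rV[R]_k) : eucl (- v) = eucl v.
Proof. by rewrite /eucl; congr Num.sqrt; apply: eq_bigr => i _; rewrite mxE sqrrN. Qed.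

Lemma euc_distC (R : realType) k (u v : 'rV[R]_k) : euc_dist u v = euc_dist v u.
Proof. by rewrite /euc_dist -euclN opprB. Qed.

Lemma eucl_eq0 (R : realType) k (v : 'rV[R]_k) : eucl v <= 0 -> v = 0.
Proof.
move=> h; apply/matrixP => i j; rewrite ord1 mxE; apply/normr0_eq0.
by apply/le_anti; rewrite normr_ge0 andbT; apply: le_trans (coord_le_eucl v j) h.
Qed.

Lemma dist_box (R : realType) k (u v : 'rV[R]_k) h :
  (forall j, `|u ord0 j - v ord0 j| <= h) -> euc_dist u v <= k%:R * h.
Proof.
move=> H; rewrite /euc_dist; apply: le_trans (eucl_le_l1 (u - v)) _.
have -> : \sum_i `|(u - v) ord0 i| = \sum_i `|u ord0 i - v ord0 i|.
  by apply: eq_bigr => i _; rewrite !mxE.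
apply: (@le_trans _ _ (\sum_(i < k) h)); first by apply: ler_sum => i _; exact: H.
by rewrite sumr_const card_ord mulr_natl.
Qed.
Local Open Scope ereal_scope.

Lemma diam_ge0 (R : realType) (T : Type) (rho : T -> T -> R) (U : set T) :
  0 <= diam rho U.
Proof. by apply: ereal_sup_ubound; left. Qed.

Lemma diam_le (R : realType) (T : Type) (rho : T -> T -> R) (U : set T) (b : R) :
  (0 <= b)%R -> (forall x y, U x -> U y -> (rho x y <= b)%R) -> diam rho U <= b%:E.
Proof.
move=> b0 H; apply/ereal_supP => z [->|]; first by rewrite lee_fin.
by move=> [x Ux [y Uy <-]]; rewrite lee_fin; apply: H.
Qed.

Lemma diam_fin (R : realType) (T : Type) (rho : T -> T -> R) (U : set T) (b : R) :
  diam rho U <= b%:E -> diam rho U = (fine (diam rho U))%:E.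
Proof.
move=> h; rewrite fineK // ge0_fin_numE ?diam_ge0 //.
by apply: le_lt_trans h _; exact: ltry.
Qed.

Lemma rho_le_diam (R : realType) (T : Type) (rho : T -> T -> R) (U : set T) (b : R) x y :
  U x -> U y -> diam rho U <= b%:E -> (rho x y <= fine (diam rho U))%R.
Proof.
move=> Ux Uy h; rewrite -lee_fin -(diam_fin h).
by apply: ereal_sup_ubound; right; exists x => //; exists y.
Qed.

Lemma fine_diam_le (R : realType) (T : Type) (rho : T -> T -> R) (U : set T) (b : R) :
  diam rho U <= b%:E -> (fine (diam rho U) <= b)%R.
Proof. by move=> h; rewrite -lee_fin -(diam_fin h). Qed.

Lemma fine_diam_ge0 (R : realType) (T : Type) (rho : T -> T -> R) (U : set T) :
  (0 <= fine (diam rho U))%R.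
Proof. by apply: fine_ge0; exact: diam_ge0. Qed.

Lemma lee_real_crit (R : realType) (x y : \bar R) :
  (forall r : R, y < r%:E -> x <= r%:E) -> x <= y.
Proof.
case: y => [t| |] H.
- case: x H => [a| |] H.
  + rewrite lee_fin leNgt; apply/negP => hat.
    have := H ((a + t) / 2)%R; rewrite !lte_fin lee_fin.
    by move=> /(_ ltac:(lra)); lra.
  + by have := H (t + 1)%R; rewrite !lte_fin leye_eq => /(_ ltac:(lra)).
  + exact: leNye.
- exact: leey.
- case: x H => [a| |] H.
  + have := H (a - 1)%R (ltNyr _); rewrite lee_fin => h; exfalso; lra.
  + by have := H 0%R (ltNyr _); rewrite leye_eq.
  + by [].
Qed.

Lemma hm_zero (R : realType) (T : Type) (rho : T -> T -> R) (s : R) (A : set T) :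
  (forall del eps : R, (0 < del)%R -> (0 < eps)%R -> exists U : nat -> set T,
     A `<=` \bigcup_i U i /\ (forall i, diam rho (U i) <= del%:E) /\
     \sum_(0 <= i <oo) ((fine (diam rho (U i))) `^ s)%:E <= eps%:E) ->
  hausdorff_measure rho s A = 0.
Proof.
move=> H.
have apx0 : forall del, 0 <= hausdorff_approx rho s del A.
  move=> del; apply/ereal_infP => y [U _ <-].
  by apply: nneseries_ge0 => i _ _; rewrite lee_fin powR_ge0.
apply/le_anti/andP; split; last first.
  apply: le_trans (apx0 1%R) _; apply: ereal_sup_ubound.
  by exists 1%R => //=; exact: ltr01.
apply/ereal_supP => y [del del0 <-].
have : forall eps : R, (0 < eps)%R -> hausdorff_approx rho s del A <= eps%:E.
  move=> eps eps0; have [U [h1 [h2 h3]]] := H del eps del0 eps0.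
  apply: ge_ereal_inf; exists (\sum_(0 <= i <oo) ((fine (diam rho (U i))) `^ s)%:E) => //.
  by exists U.
have := apx0 del.
case: (hausdorff_approx rho s del A) => [a| |] // a0 Ha.
  rewrite lee_fin in a0 *; rewrite leNgt; apply/negP => ha.
  have h2 : (0 < a / 2)%R by rewrite divr_gt0.
  by have := Ha _ h2; rewrite lee_fin; lra.
by have := Ha 1%R; rewrite leye_eq => /(_ ltr01).
Qed.

Lemma hm_zero_inv (R : realType) (T : Type) (rho : T -> T -> R) (s : R) (A : set T) :
  hausdorff_measure rho s A = 0 ->
  forall del eps : R, (0 < del)%R -> (0 < eps)%R -> exists U : nat -> set T,
     A `<=` \bigcup_i U i /\ (forall i, diam rho (U i) <= del%:E) /\
     \sum_(0 <= i <oo) ((fine (diam rho (U i))) `^ s)%:E < eps%:E.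
Proof.
move=> H0 del eps del0 eps0.
have : hausdorff_approx rho s del A < eps%:E.
  apply: le_lt_trans (_ : _ <= 0) _; last by rewrite lte_fin.
  by rewrite -H0; apply: ereal_sup_ubound; exists del.
move=> /ereal_inf_lt [y [U [h1 h2] <-] hy].
by exists U.
Qed.

Lemma dim_le_of (R : realType) (T : Type) (rho : T -> T -> R) (s : R) (A : set T) :
  (0 < s)%R -> hausdorff_measure rho s A = 0 -> hausdorff_dim rho A <= s%:E.
Proof. by move=> s0 H; apply: ereal_inf_lbound; exists s. Qed.

Local Close Scope ereal_scope.
Lemma incr_ge (p : nat -> nat) : (forall k, p k < p k.+1)%N -> forall k, (k <= p k)%N.
Proof.
move=> H; elim=> [|k IH] //; apply: leq_ltn_trans IH (H k).
Qed.

Lemma incr_lt (p : nat -> nat) : (forall k, p k < p k.+1)%N ->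
  forall a b, (a < b)%N -> (p a < p b)%N.
Proof.
move=> H a; elim=> [|b IH] //; rewrite ltnS leq_eqVlt => /orP [/eqP ->|hab] //.
exact: ltn_trans (IH hab) (H b).
Qed.

Lemma small_le0 (R : realType) (x c : R) :
  0 <= c -> (forall e, 0 < e -> x <= c * e) -> x <= 0.
Proof.
move=> c0 H; rewrite leNgt; apply/negP => x0.
have c1 : 0 < c + 1 by lra.
have := H (x / (c + 1)) (divr_gt0 x0 c1).
rewrite mulrA ler_pdivlMr // => h; nra.
Qed.

Lemma Delta_compact (R : realType) (d n : nat) (D : set 'rV[R]_d)
  (L1 L2 : Type) (rho1 : L1 -> L1 -> R) (rho2 : L2 -> L2 -> R)
  (phi1 : 'rV[R]_d -> L1 -> 'rV[R]_n) (phi2 : 'rV[R]_d -> L2 -> 'rV[R]_n) :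
  metric_compact (@euc_dist R d) D ->
  metric_compact rho1 setT -> metric_compact rho2 setT ->
  (forall xi x, D xi -> forall e, 0 < e -> exists2 del, 0 < del &
     forall xi' x', D xi' -> euc_dist xi' xi < del -> rho1 x' x < del ->
       euc_dist (phi1 xi' x') (phi1 xi x) < e) ->
  (forall xi x, D xi -> forall e, 0 < e -> exists2 del, 0 < del &
     forall xi' x', D xi' -> euc_dist xi' xi < del -> rho2 x' x < del ->
       euc_dist (phi2 xi' x') (phi2 xi x) < e) ->
  metric_compact (@euc_dist R d) [set xi | D xi /\ exists x1 x2, phi1 xi x1 = phi2 xi x2].
Proof.
move=> cD c1 c2 ct1 ct2 u Hu.
have [w1 Hw1] := choice (fun k => (Hu k).2).
have [w2 Hw2] := choice Hw1.
have [p1 [xi [Dxi [ip1 cv1]]]] := cD u (fun k => (Hu k).1).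
have [p2 [x1 [_ [ip2 cv2]]]] := c1 (fun k => w1 (p1 k)) (fun _ => I).
have [p3 [x2 [_ [ip3 cv3]]]] := c2 (fun k => w2 (p1 (p2 k))) (fun _ => I).
exists (fun k => p1 (p2 (p3 k))), xi; split; last split.
- split => //; exists x1, x2; apply/eqP; rewrite -subr_eq0; apply/eqP/eucl_eq0.
  apply: (@small_le0 _ _ (n%:R * 2)); first by rewrite mulr_ge0.
  move=> e e0.
  have [del1 del10 Hd1] := ct1 xi x1 Dxi e e0.
  have [del2 del20 Hd2] := ct2 xi x2 Dxi e e0.
  pose del := Num.min del1 del2.
  have del0 : 0 < del by rewrite lt_min del10 del20.
  have [N1 HN1] := cv1 del del0.
  have [N2 HN2] := cv2 del del0.
  have [N3 HN3] := cv3 del del0.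
  pose k := (N1 + N2 + N3)%N.
  have k1 : (N1 <= p2 (p3 k))%N.
    apply: leq_trans (incr_ge ip2 _); apply: leq_trans (incr_ge ip3 _).
    by rewrite /k -addnA leq_addr.
  have k2 : (N2 <= p3 k)%N.
    apply: leq_trans (incr_ge ip3 _); by rewrite /k -addnA addnC -addnA leq_addr.
  have k3 : (N3 <= k)%N by rewrite /k leq_addl.
  have h1 := HN1 _ k1. have h2 := HN2 _ k2. have h3 := HN3 _ k3.
  move: h1 h2 h3; rewrite !lt_min => /andP [h1a h1b] /andP [h2a h2b] /andP [h3a h3b].
  set P := p1 (p2 (p3 k)).
  have DP : D (u P) := (Hu P).1.
  have e1 := Hd1 _ _ DP h1a h2a.
  have e2 := Hd2 _ _ DP h1b h3b.
  have Heq := Hw2 P.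
  have -> : phi1 xi x1 - phi2 xi x2 =
     (phi1 xi x1 - phi1 (u P) (w1 P)) + (phi2 (u P) (w2 P) - phi2 xi x2).
    by rewrite Heq addrA subrK.
  apply: le_trans (euclD _ _) _.
  rewrite -mulrA ler_wpM2l // mulrDl mul1r.
  apply: lerD; apply/ltW => //.
  by move: e1; rewrite euc_distC.
- by move=> k; apply: (incr_lt ip1); apply: (incr_lt ip2); exact: ip3.
- move=> e e0; have [N HN] := cv1 e e0; exists N => k kN.
  by apply: HN; apply: leq_trans kN _; apply: leq_trans (incr_ge ip2 _); exact: incr_ge.
Qed.
Lemma transfer (R : realType) (d n : nat) (D : set 'rV[R]_d)
  (L1 L2 : Type) (rho1 : L1 -> L1 -> R) (rho2 : L2 -> L2 -> R)
  (phi1 : 'rV[R]_d -> L1 -> 'rV[R]_n) (phi2 : 'rV[R]_d -> L2 -> 'rV[R]_n)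
  (C alpha M s : R) :
  is_metric rho1 -> is_metric rho2 ->
  0 < C -> 0 < alpha ->
  (forall xi x y, D xi -> euc_dist (phi1 xi x) (phi1 xi y) <= C * (rho1 x y) `^ alpha) ->
  (forall xi x y, D xi -> euc_dist (phi2 xi x) (phi2 xi y) <= C * (rho2 x y) `^ alpha) ->
  0 < M ->
  (forall x1 x2 xi xi', D xi -> D xi' ->
     M * euc_dist xi' xi <=
     eucl ((phi1 xi' x1 - phi2 xi' x2) - (phi1 xi x1 - phi2 xi x2))) ->
  0 < s ->
  hausdorff_measure (prod_dist rho1 rho2) s setT = 0 ->
  hausdorff_measure (@euc_dist R d) (s / alpha)
     [set xi | D xi /\ exists x1 x2, phi1 xi x1 = phi2 xi x2] = 0.
Proof.
move=> [m1ge0 _] [m2ge0 _] C0 a0 hol1 hol2 M0 tr s0 H0.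
apply: hm_zero => del' eps' del'0 eps'0.
pose q : R := n%:R.
have q0 : 0 <= q by rewrite /q ler0n.
pose K := q * (C + C) / M + 1.
have K0 : 0 < K by rewrite /K; apply: ltr_wpDl => //; apply: divr_ge0; [apply: mulr_ge0; lra | lra].
pose dl := (del' / K) `^ (alpha^-1).
have dl0 : 0 < dl by apply: powR_gt0; exact: divr_gt0.
have dla : dl `^ alpha = del' / K.
  by rewrite /dl -powRrM mulVf ?gt_eqF // powRr1 // ltW // divr_gt0.
pose K' := K `^ (s / alpha).
have K'0 : 0 < K' by exact: powR_gt0.
have [U [Ucov [Udiam Usum]]] := hm_zero_inv H0 dl0 (divr_gt0 eps'0 K'0).
pose V i := [set xi | D xi /\ exists x1 x2, U i (x1, x2) /\ phi1 xi x1 = phi2 xi x2].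
pose r i := fine (diam (prod_dist rho1 rho2) (U i)).
have r0 i : 0 <= r i by exact: fine_diam_ge0.
have ra0 i : 0 <= r i `^ alpha by exact: powR_ge0.
have rdl i : r i `^ alpha <= del' / K.
  rewrite -dla; apply: ge0_ler_powR; rewrite ?nnegrE.
  - exact: ltW.
  - exact: r0.
  - exact: ltW.
  - exact: fine_diam_le (Udiam i).
have Vd i : (diam (@euc_dist R d) (V i) <= (K * r i `^ alpha)%:E)%E.
  apply: diam_le; first by apply: mulr_ge0; [exact: ltW | exact: ra0].
  move=> a b [Da [x1 [x2 [Ux ea]]]] [Db [y1 [y2 [Uy eb]]]].
  have E : (phi1 a x1 - phi2 a x2) - (phi1 b x1 - phi2 b x2) =
           (phi1 b y1 - phi1 b x1) + (phi2 b x2 - phi2 b y2).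
    by rewrite ea eb subrr sub0r opprB [RHS]addrC addrA subrK.
  have T := tr x1 x2 b a Db Da; rewrite E in T.
  have T2 := le_trans T (euclD _ _).
  have p1 : rho1 y1 x1 <= r i.
    apply: le_trans (rho_le_diam Uy Ux (Udiam i)).
    by rewrite /prod_dist /= le_max lexx.
  have p2 : rho2 x2 y2 <= r i.
    apply: le_trans (rho_le_diam Ux Uy (Udiam i)).
    by rewrite /prod_dist /= le_max lexx orbT.
  have h1 : eucl (phi1 b y1 - phi1 b x1) <= C * r i `^ alpha.
    apply: le_trans (hol1 b y1 x1 Db) _; apply: ler_wpM2l; first exact: ltW.
    apply: ge0_ler_powR; rewrite ?nnegrE //; exact: ltW.
  have h2 : eucl (phi2 b x2 - phi2 b y2) <= C * r i `^ alpha.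
    apply: le_trans (hol2 b x2 y2 Db) _; apply: ler_wpM2l; first exact: ltW.
    apply: ge0_ler_powR; rewrite ?nnegrE //; exact: ltW.
  have T3 : M * euc_dist a b <= q * (C + C) * r i `^ alpha.
    apply: le_trans T2 _; rewrite -mulrA ler_wpM2l // mulrDl; exact: lerD.
  rewrite -(ler_pM2l M0); apply: le_trans T3 _.
  have -> : M * (K * r i `^ alpha) = q * (C + C) * r i `^ alpha + M * r i `^ alpha.
    by rewrite /K; field; rewrite gt_eqF.
  by rewrite lerDl; apply: mulr_ge0 => //; exact: ltW.
exists V; split; [|split].
- move=> xi [Dxi [x1 [x2 e]]].
  have [i _ Ui] := Ucov (x1, x2) I.
  by exists i => //; split => //; exists x1, x2.
- move=> i; apply: le_trans (Vd i) _; rewrite lee_fin.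
  apply: le_trans (_ : K * (del' / K) <= _); first by apply: ler_wpM2l; [exact: ltW | exact: rdl].
  by rewrite mulrC divfK ?gt_eqF.
- apply: (@le_trans _ _ (\sum_(0 <= i <oo) (K'%:E * ((r i) `^ s)%:E))%E).
    apply: lee_nneseries => [i _ _|i _]; first by rewrite lee_fin powR_ge0.
    rewrite -EFinM lee_fin.
    have -> : K' * r i `^ s = (K * r i `^ alpha) `^ (s / alpha).
      rewrite powRM //; last exact: ltW.
      by rewrite -powRrM (mulrC alpha) divfK ?gt_eqF.
    apply: ge0_ler_powR; rewrite ?nnegrE ?fine_diam_ge0 //.
    - by apply: divr_ge0; exact: ltW.
    - by apply: mulr_ge0; [exact: ltW | exact: ra0].
    - exact: fine_diam_le (Vd i).
  rewrite nneseriesZl; last by move=> i _; rewrite lee_fin powR_ge0.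
  apply: le_trans (lee_wpmul2l _ (ltW Usum)) _; first by rewrite lee_fin ltW.
  by rewrite -EFinM lee_fin mulrC divfK ?gt_eqF.
Qed.
Lemma box_bound (R : realType) (d : nat) (D : set 'rV[R]_d) :
  metric_compact (@euc_dist R d) D ->
  exists2 B, 0 < B & forall xi, D xi -> forall j, `|xi ord0 j| <= B.
Proof.
move=> cD.
have [[B [B0 HB]]|nb] := pselect (exists B, 0 < B /\ forall xi, D xi -> eucl xi <= B).
  exists B => // xi Dxi j; apply: le_trans (coord_le_eucl xi j) _; exact: HB.
have Hk : forall k : nat, exists xi, D xi /\ k%:R < eucl xi.
  move=> k; apply: contrapT => hk; apply: nb; exists (k%:R + 1); split.
    by apply: ltr_pwDr => //; exact: ler0n.
  move=> xi Dxi; rewrite leNgt; apply/negP => h; apply: hk; exists xi; split => //.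
  by apply: le_lt_trans h; rewrite lerDl.
have [u Hu] := choice Hk.
have [p [x [Dx [ip cv]]]] := cD u (fun k => (Hu k).1).
have [N HN] := cv 1 ltr01.
pose c := d%:R * (1 + eucl x).
pose k := (N + (Num.trunc c).+1)%N.
have hk1 : (N <= k)%N by rewrite /k leq_addr.
have h1 := HN k hk1.
have h2 : eucl (u (p k)) <= c.
  have -> : u (p k) = (u (p k) - x) + x by rewrite subrK.
  apply: le_trans (euclD _ _) _; rewrite /c ler_wpM2l ?ler0n // lerD2r.
  exact: ltW.
have h3 : c < k%:R.
  apply: lt_le_trans (truncnS_gt c) _; rewrite ler_nat /k leq_addl //.
have h4 : (k%:R : R) <= (p k)%:R by rewrite ler_nat; exact: incr_ge.
have h5 := (Hu (p k)).2.
have : c < c by apply: lt_le_trans h3 _; apply: le_trans h4 _; apply: le_trans h2; exact: ltW.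
by rewrite ltxx.
Qed.
Lemma dim_d (R : realType) (d : nat) (A : set 'rV[R]_d) (B s : R) :
  0 < B -> (forall xi, A xi -> forall j, `|xi ord0 j| <= B) -> d%:R < s ->
  hausdorff_measure (@euc_dist R d) s A = 0.
Proof.
move=> B0 HB ds.
have s0 : 0 < s by apply: le_lt_trans ds; exact: ler0n.
apply: hm_zero => del eps del0 eps0.
pose a : R := 2 * B * d%:R.
have a0 : 0 <= a by rewrite /a mulr_ge0 ?ler0n // mulr_ge0 //; exact: ltW.
pose c := a `^ s / eps.
have sd0 : 0 < s - d%:R by rewrite subr_gt0.
pose X := Num.max (c `^ (s - d%:R)^-1) (Num.max (a / del) 1).
pose m := Num.trunc X.
pose N : R := m.+1%:R.
have XN : X < N := truncnS_gt X.
have N0 : 0 < N by rewrite /N ltr0n.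
have NX1 : c `^ (s - d%:R)^-1 < N by apply: le_lt_trans XN; rewrite /X le_max lexx.
have NX2 : a / del < N by apply: le_lt_trans XN; rewrite /X le_max le_max lexx orbT.
pose h := 2 * B / N.
have h0 : 0 < h by rewrite /h divr_gt0 // mulr_gt0.
pose T := {ffun 'I_d -> 'I_m.+1}.
pose cube (f : T) := [set xi : 'rV[R]_d | forall j,
  - B + (f j)%:R * h <= xi ord0 j <= - B + (f j)%:R * h + h].
pose U (k : nat) := [set xi | exists f : T, (enum_rank f : nat) = k /\ cube f xi].
have Ud k : (diam (@euc_dist R d) (U k) <= (d%:R * h)%:E)%E.
  apply: diam_le; first by rewrite mulr_ge0 ?ler0n // ltW.
  move=> x y [f [ef cf]] [g [eg cg]].
  have fg : f = g by apply: enum_rank_inj; apply: val_inj; rewrite /= ef eg.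
  subst g; apply: dist_box => j.
  have := cf j; have := cg j; move=> /andP [h1 h2] /andP [h3 h4].
  rewrite ler_norml; apply/andP; split; lra.
have U0 k : (#|T| <= k)%N -> (diam (@euc_dist R d) (U k) <= 0%:E)%E.
  move=> hk; apply: diam_le => // x y [f [ef _]].
  by have := ltn_ord (enum_rank f); rewrite ef ltnNge hk.
exists U; split; [|split].
- move=> xi Axi.
  pose f : T := [ffun j => inord (minn (Num.trunc ((xi ord0 j + B) / h)) m)].
  exists (enum_rank f : nat) => //; exists f; split => // j.
  have hb := HB xi Axi j; move: hb; rewrite ler_norml => /andP [hb1 hb2].
  have y0 : 0 <= (xi ord0 j + B) / h by apply: divr_ge0; [lra | exact: ltW].
  have := truncn_itv y0; set t := Num.trunc _ => /andP [t1 t2].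
  rewrite /f ffunE inordK ?ltnS ?geq_minr //.
  have Nh : N * h = 2 * B by rewrite /h mulrC divfK ?gt_eqF.
  case: (leqP t m) => tm.
  + rewrite ler_pdivlMr // in t1; rewrite ltr_pdivrMr // in t2.
    rewrite -natr1 mulrDl mul1r in t2.
    apply/andP; split; lra.
  +
    have : N <= t%:R by rewrite /N ler_nat.
    move=> Nt; have Nt2 := le_trans Nt t1.
    rewrite ler_pdivlMr // Nh in Nt2.
    have hm : m%:R * h + h = 2 * B by rewrite -Nh /N -natr1 mulrDl mul1r.
    apply/andP; split; lra.
- move=> i; apply: le_trans (Ud i) _; rewrite lee_fin /h.
  rewrite mulrA ler_pdivrMr //.
  have := NX2; rewrite ltr_pdivrMr // => hh.
  rewrite mulrC; apply: ltW; move: hh; rewrite /a (mulrC del) //.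
- rewrite (nneseries_split 0 #|T%type|); last by move=> k _; rewrite lee_fin powR_ge0.
  rewrite [X in (_ + X)%E]eseries0 ?adde0; last first.
    move=> k hk _.
    have := U0 k hk; move/fine_diam_le => h1.
    have -> : fine (diam (@euc_dist R d) (U k)) = 0.
      by apply/le_anti; rewrite h1 fine_diam_ge0.
    by rewrite powR0 // gt_eqF.
  apply: (@le_trans _ _ (\sum_(0 <= k < 0 + #|T|) ((d%:R * h) `^ s)%:E)%E).
    apply: lee_sum => k _; rewrite lee_fin; apply: ge0_ler_powR.
    - exact: ltW.
    - by rewrite nnegrE fine_diam_ge0.
    - by rewrite nnegrE mulr_ge0 ?ler0n // ltW.
    - exact: fine_diam_le (Ud k).
  rewrite sumEFin lee_fin sumr_const_nat subn0 add0n.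
  rewrite /T card_ffun !card_ord.
  have -> : forall x : R, x *+ (m.+1 ^ d) = x * N ^+ d by move=> x; rewrite -natrX mulr_natr.
  have dh : d%:R * h = a / N by rewrite /h /a; field; rewrite gt_eqF.
  rewrite dh.
  have aN : (a / N) `^ s = a `^ s / N `^ s.
    have Ns0 : 0 < N `^ s by exact: powR_gt0.
    apply: (mulIf (lt0r_neq0 Ns0)).
    by rewrite divfK ?gt_eqF // -powRM ?divfK ?gt_eqF // ?divr_ge0 // ltW.
  have Ns : N `^ s = N ^+ d * N `^ (s - d%:R).
    rewrite -(powR_mulrn d (ltW N0)) -powRD; first by rewrite [d%:R + _]addrC subrK.
    by apply/implyP => _; exact: lt0r_neq0 N0.
  rewrite aN Ns.
  have Nd0 : 0 < N ^+ d by exact: exprn_gt0.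
  have Nsd0 : 0 < N `^ (s - d%:R) by exact: powR_gt0.
  have -> : a `^ s / (N ^+ d * N `^ (s - d%:R)) * N ^+ d = a `^ s / N `^ (s - d%:R).
    by field; rewrite !gt_eqF.
  rewrite ler_pdivrMr //.
  have c0 : 0 <= c by rewrite /c divr_ge0 ?powR_ge0 // ltW.
  have : c <= N `^ (s - d%:R).
    have -> : c = (c `^ (s - d%:R)^-1) `^ (s - d%:R).
      by rewrite -powRrM mulVf ?gt_eqF // powRr1.
    apply: ge0_ler_powR; rewrite ?nnegrE ?powR_ge0 ?ltW //.
  rewrite /c ler_pdivrMr // => hc.
  by rewrite mulrC.
Qed.
Unset Implicit Arguments.

Theorem theorem13 (R : realType) (d n : nat) (D : set 'rV[R]_d)
  (L1 L2 : Type) (rho1 : L1 -> L1 -> R) (rho2 : L2 -> L2 -> R)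
  (phi1 : 'rV[R]_d -> L1 -> 'rV[R]_n) (phi2 : 'rV[R]_d -> L2 -> 'rV[R]_n)
  (C alpha M : R) :
  metric_compact (@euc_dist R d) D ->
  is_metric rho1 -> metric_compact rho1 setT ->
  is_metric rho2 -> metric_compact rho2 setT ->
  (* continuity of phi1 on D x L1 *)
  (forall xi x, D xi -> forall e, 0 < e -> exists2 del, 0 < del &
     forall xi' x', D xi' -> euc_dist xi' xi < del -> rho1 x' x < del ->
       euc_dist (phi1 xi' x') (phi1 xi x) < e) ->
  (* continuity of phi2 on D x L2 *)
  (forall xi x, D xi -> forall e, 0 < e -> exists2 del, 0 < del &
     forall xi' x', D xi' -> euc_dist xi' xi < del -> rho2 x' x < del ->
       euc_dist (phi2 xi' x') (phi2 xi x) < e) ->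
  (* (a) Hoelder condition in x *)
  0 < C -> 0 < alpha -> alpha <= 1 ->
  (forall xi x y, D xi -> euc_dist (phi1 xi x) (phi1 xi y) <= C * (rho1 x y) `^ alpha) ->
  (forall xi x y, D xi -> euc_dist (phi2 xi x) (phi2 xi y) <= C * (rho2 x y) `^ alpha) ->
  (* (b) transversality *)
  0 < M ->
  (forall x1 x2 xi xi', D xi -> D xi' ->
     M * euc_dist xi' xi <=
     eucl ((phi1 xi' x1 - phi2 xi' x2) - (phi1 xi x1 - phi2 xi x2))) ->
  let Delta := [set xi | D xi /\ exists x1 x2, phi1 xi x1 = phi2 xi x2] in
  metric_compact (@euc_dist R d) Delta /\
  (hausdorff_dim (@euc_dist R d) Delta <=
     Order.min (hausdorff_dim (prod_dist rho1 rho2) setT * (alpha^-1)%:E) (d%:R)%:E)%E.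
Proof.
move=> cD m1 c1 m2 c2 ct1 ct2 C0 a0 a1 hol1 hol2 M0 tr Delta.
rewrite /Delta; split; first exact: (Delta_compact cD c1 c2 ct1 ct2).
rewrite le_min; apply/andP; split.
- apply: lee_real_crit => r hr.
  have hr2 : (hausdorff_dim (prod_dist rho1 rho2) setT < (r * alpha)%:E)%E.
    rewrite ltNge; apply/negP => h; move: hr; rewrite ltNge => /negP; apply.
    have ai0 : (0 <= (alpha^-1)%:E)%E by rewrite lee_fin invr_ge0 ltW.
    apply: le_trans (lee_wpmul2r ai0 h); rewrite -EFinM mulfK //.
    exact: lt0r_neq0.
  have [y [s [s0 Hs] <-] ys] := ereal_inf_lt hr2.
  have H := transfer m1 m2 C0 a0 hol1 hol2 M0 tr s0 Hs.
  apply: le_trans (dim_le_of _ H) _; first by apply: divr_gt0.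
  rewrite lee_fin ler_pdivrMr //; apply: ltW; by rewrite -lte_fin.
- apply: lee_real_crit => r hr; rewrite lte_fin in hr.
  have [B B0 HB] := box_bound cD.
  have r0 : 0 < r by apply: le_lt_trans hr; exact: ler0n.
  apply: dim_le_of r0 _; apply: (dim_d B0) => // xi [Dxi _]; exact: HB.
Qed.
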